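(* Let $d\ge 1$ and $2\le n_1\le n_2\le\cdots\le n_d$ be integers, and let $G=K_{n_1}\times K_{n_2}\times\cdots\times K_{n_d}$. Then $\sigma_T(G)=2d-1$ if $n_1=2$, and $\sigma_T(G)=2d$ if $n_1\ge 3$.
   Context: $K_n$ is the complete graph on $n$ vertices and $\times$ is the Cartesian product of graphs. Thus $G$ has vertex set $\{(x_1,\dots,x_d): x_i\in\{0,1,\dots,n_i-1\}\}$, two vertices being adjacent iff they differ in exactly one coordinate (a Hamming graph). For a spanning tree $T$ of a connected graph $G$, $d_T(u,v)$ is the distance between $u$ and $v$ in $T$, $\sigma_T(G,T):=\max_{uv\in E(G)} d_T(u,v)$, and the tree-stretch is $\sigma_T(G):=\min\{\sigma_T(G,T): T \text{ a spanning tree of } G\}$. *)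

(* Defs.v *)
From mathcomp Require Import all_boot.
Set Implicit Arguments. Unset Strict Implicit. Unset Printing Implicit Defensive.

(* Vertices of K_{n_0} x ... x K_{n_{d-1}}: tuples x with x_i in {0,..,n_i - 1}.
   Only the values n 0, ..., n (d-1) of n : nat -> nat are relevant. *)
Definition hvert (d : nat) (n : nat -> nat) : finType :=
  {dffun forall i : 'I_d, 'I_(n i)}.

Definition hadj d n (u v : hvert d n) : bool :=
  #|[set i : 'I_d | nat_of_ord (u i) != nat_of_ord (v i)]| == 1.

Section Graphs.
Variable V : finType.

Definition erel (E : {set V * V}) : rel V := fun u v => (u, v) \in E.

(* E is (the arc set of) a spanning tree of the graph with adjacency g:
   E is a symmetric subgraph of g, connected, and acyclic (every edge is a
   bridge: deleting it disconnects its endpoints). *)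
Definition spanning_tree (g : rel V) (E : {set V * V}) : bool :=
  [&& [forall u, forall v, ((u, v) \in E) ==> g u v],
      [forall u, forall v, ((u, v) \in E) ==> ((v, u) \in E)],
      [forall u, forall v, connect (erel E) u v] &
      [forall u, forall v, ((u, v) \in E) ==>
          ~~ connect (erel (E :\ (u, v) :\ (v, u))) u v]].

Definition walk_len (E : {set V * V}) (k : nat) (u v : V) : bool :=
  [exists p : k.-tuple V, path (erel E) u p && (last u p == v)].

(* distance in E: least k with a walk of length k (#|V| if none) *)
Definition dist (E : {set V * V}) (u v : V) : nat :=
  find (fun k => walk_len E k u v) (iota 0 #|V|).

Definition stretch (g : rel V) (E : {set V * V}) : nat :=
  \max_(p : V * V | g p.1 p.2) dist E p.1 p.2.

(* sigma_T(G) = min over spanning trees T of sigma_T(G, T)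
   (the default #|V| is never reached once a spanning tree exists) *)
Definition tree_stretch (g : rel V) : nat :=
  \big[minn/#|V|]_(E : {set V * V} | spanning_tree g E) stretch g E.
End Graphs.

(* Main.v *)
Require Import Defs.
From mathcomp Require Import all_boot zify.
Set Implicit Arguments. Unset Strict Implicit. Unset Printing Implicit Defensive.

Section Gen.
Variable V : finType.
Implicit Types (E : {set V * V}) (g : rel V).

Lemma walk_lenP E k u v :
  reflect (exists p : seq V, [/\ size p = k, path (erel E) u p & last u p = v])
          (walk_len E k u v).
Proof.
apply: (iffP existsP) => [[p /andP[Hp /eqP Hl]] | [p [Hs Hp Hl]]].
  by exists (val p); rewrite size_tuple.
have Hs' : size p == k by rewrite Hs.
by exists (Tuple Hs'); rewrite /= Hp Hl eqxx.
Qed.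

Lemma walk0 E u : walk_len E 0 u u.
Proof. by apply/walk_lenP; exists [::]. Qed.

Lemma walk1 E u v : (u, v) \in E -> walk_len E 1 u v.
Proof. by move=> H; apply/walk_lenP; exists [:: v]; rewrite /= /erel H. Qed.

Lemma walk_cat E k1 k2 u w v :
  walk_len E k1 u w -> walk_len E k2 w v -> walk_len E (k1 + k2) u v.
Proof.
move=> /walk_lenP[p [Hs Hp Hl]] /walk_lenP[q [Hs' Hq Hl']].
apply/walk_lenP; exists (p ++ q); rewrite size_cat Hs Hs' cat_path last_cat Hp Hl Hq.
by [].
Qed.

Lemma walk_sym E k u v :
  (forall a b, (a, b) \in E -> (b, a) \in E) ->
  walk_len E k u v -> walk_len E k v u.
Proof.
move=> Hsym /walk_lenP[p [Hs Hp Hl]]; apply/walk_lenP.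
exists (rev (belast u p)); split; first by rewrite size_rev size_belast.
  rewrite -Hl rev_path; apply: sub_path Hp => a b; rewrite /erel /=; exact: Hsym.
by case: p Hs Hp Hl => [|a p] _ _ /= <- //; rewrite rev_cons last_rcons.
Qed.

Lemma dist_le E k u v : walk_len E k u v -> dist E u v <= k.
Proof.
move=> Hw; rewrite /dist leqNgt; apply/negP => Hk.
have Hks : k < size (iota 0 #|V|) by apply: leq_trans Hk (find_size _ _).
have := before_find 0 Hk; rewrite nth_iota; last by rewrite size_iota in Hks.
by rewrite add0n Hw.
Qed.

Lemma dist_ge E t u v : t <= #|V| ->
  (forall k, k < t -> ~~ walk_len E k u v) -> t <= dist E u v.
Proof.
move=> Ht H; rewrite /dist leqNgt; apply/negP => Hlt.
have Hs : find (fun k => walk_len E k u v) (iota 0 #|V|) < size (iota 0 #|V|).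
  by rewrite size_iota; apply: leq_trans Hlt Ht.
have Hh : has (fun k => walk_len E k u v) (iota 0 #|V|) by rewrite has_find.
have := nth_find 0 Hh; rewrite nth_iota ?add0n; last by move: Hs; rewrite size_iota.
by move=> Hw; move: (H _ Hlt); rewrite Hw.
Qed.

Lemma tree_stretch_le g E : spanning_tree g E -> tree_stretch g <= stretch g E.
Proof.
move=> HT; rewrite /tree_stretch.
have : E \in index_enum {set V * V} by rewrite mem_index_enum.
elim: (index_enum _) => [//|a s IH]; rewrite inE big_cons.
case/orP => [/eqP <-| Hin]; first by rewrite HT geq_minl.
by case: ifP => _; [apply: leq_trans (geq_minr _ _) (IH Hin) | exact: IH].
Qed.

Lemma tree_stretch_ge g t : t <= #|V| ->
  (forall E, spanning_tree g E -> t <= stretch g E) -> t <= tree_stretch g.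
Proof.
move=> Ht H; rewrite /tree_stretch; elim/big_ind: _ => //.
by move=> x y Hx Hy; rewrite leq_min Hx Hy.
Qed.

End Gen.

Section LB.
Variables (V : finType) (g : rel V) (h : V -> V -> nat) (E : {set V * V}).
Variables (t : nat) (S : V -> pred V) (good : V -> rel V) (v0 : V).
Hypothesis HT : spanning_tree g E.
Hypothesis Hirr : forall u, ~~ g u u.
Hypothesis Hlip : forall u a w, g u a -> h u w <= (h a w).+1.
Hypothesis Hhc : forall u, h u u = 0.
Hypothesis Hgood : forall c x y, good c x y -> g x y /\ t <= h x c + h c y.
Hypothesis Hconn : forall c, exists s, s != c /\ forall y, S c y -> connect (good c) s y.
Hypothesis Hint : forall c c', g c c' -> exists x, S c x /\ S c' x.
Hypothesis Ht : t <= #|V|.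

Definition Er c c' := E :\ (c, c') :\ (c', c).
Definition side c c' y := connect (erel (Er c c')) c' y.

Lemma HTg u v : (u, v) \in E -> g u v.
Proof. by case/and4P: HT => /forallP/(_ u)/forallP/(_ v)/implyP H _ _ _; apply: H. Qed.
Lemma HTs u v : (u, v) \in E -> (v, u) \in E.
Proof. by case/and4P: HT => _ /forallP/(_ u)/forallP/(_ v)/implyP H _ _; apply: H. Qed.
Lemma HTc u v : connect (erel E) u v.
Proof. by case/and4P: HT => _ _ /forallP/(_ u)/forallP/(_ v) H _. Qed.
Lemma HTb u v : (u, v) \in E -> ~~ connect (erel (Er u v)) u v.
Proof. by case/and4P: HT => _ _ _ /forallP/(_ u)/forallP/(_ v)/implyP H; apply: H. Qed.

Lemma Er_sym c c' : symmetric (erel (Er c c')).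
Proof.
have H : forall a b, erel (Er c c') a b -> erel (Er c c') b a.
  move=> a b; rewrite /erel /Er !inE !xpair_eqE => /and3P[H1 H2 H3].
  by rewrite (HTs H3) andbT; apply/andP; split; [move: H2|move: H1]; apply: contra;
     case/andP => -> ->.
by move=> a b; apply/idP/idP; apply: H.
Qed.

Lemma Er_swap c c' : Er c' c = Er c c'.
Proof. by apply/setP => z; rewrite /Er !inE andbA [X in X && _]andbC -andbA. Qed.

Lemma conn_sym c c' a b : connect (erel (Er c c')) a b -> connect (erel (Er c c')) b a.
Proof. by rewrite (sym_connect_sym (@Er_sym c c')). Qed.

Lemma walk_h p u : path (erel E) u p -> h u (last u p) <= size p.
Proof.
elim: p u => [|a p IH] u /=; first by rewrite Hhc.
case/andP => Ha Hp; apply: leq_trans (Hlip _ (HTg Ha)) _; exact: IH.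
Qed.

Lemma path_Er c c' x p : c \notin x :: p -> path (erel E) x p ->
  path (erel (Er c c')) x p /\ path (erel (Er c' c)) x p.
Proof.
move=> Hc Hp.
have Hall : all (fun z => z != c) (x :: p).
  by apply/allP => z Hz; apply/eqP => Hzc; rewrite -Hzc Hz in Hc.
split; apply: (sub_in_path (P := fun z => z != c)) Hall Hp;
  move=> a b Ha Hb; rewrite /erel /Er !inE !xpair_eqE => ->;
  by rewrite (negbTE Ha) (negbTE Hb) !andbF.
Qed.

Section Contra.
Hypothesis Hd : forall x y, g x y -> dist E x y < t.

Lemma closure c c' x y : good c x y -> side c c' x -> side c c' y.
Proof.
case/Hgood => Hg Ht' Hx; apply/negPn/negP => Hny.
suff : t <= dist E x y by rewrite leqNgt Hd.
apply: dist_ge => // k Hk; apply/negP => /walk_lenP[p [Hs Hp Hl]].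
case Hc: (c \in x :: p).
  case/splitPl: Hc Hp Hl Hs => p1 p2 Hl1.
  rewrite cat_path last_cat Hl1 size_cat => /andP[Hp1 Hp2] Hl2 Hs.
  have := walk_h Hp1; rewrite Hl1; have := walk_h Hp2; rewrite Hl2. lia.
case: (path_Er c' (negbT Hc) Hp) => Hp' _.
move: Hny; rewrite /side => Hny; case/negP: Hny; apply: connect_trans Hx _; apply/connectP; exists p => //.
Qed.

Lemma closure_conn c c' a b : connect (good c) a b -> side c c' a -> side c c' b.
Proof.
case/connectP => p Hp ->; elim: p a Hp => [|z p IH] a //= /andP[Haz Hp] Ha.
by apply: IH Hp _; apply: closure Haz Ha.
Qed.

Lemma ex_ptr c : exists c', (c, c') \in E /\ forall y, S c y -> side c c' y.
Proof.
case: (Hconn c) => s [Hsc Hcon].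
case/connectP: (HTc c s) => p Hp Hl; move: Hsc Hcon; rewrite Hl.
case/shortenP: Hp => p' Hp' Hu _; case: p' Hp' Hu => [|c' q]; first by rewrite eqxx.
rewrite /= => /andP[Hcc' Hq] /andP[Hnc _] _ Hcon; exists c'; split => // y Hy.
apply: closure_conn (Hcon y Hy) _; apply/connectP; exists q => //.
by case: (path_Er c' Hnc Hq).
Qed.

Lemma contra_main : False.
Proof.
pose Pa (p : V * V) := (p \in E) && [forall y, S p.1 y ==> side p.1 p.2 y].
have [c0 [H0 H0']] := ex_ptr v0.
have HP0 : Pa (v0, c0).
  by rewrite /Pa H0; apply/forallP => y; apply/implyP; apply: H0'.
case: (arg_minnP (fun p : V * V => #|[set y | side p.1 p.2 y]|) HP0) => [[c c']].
rewrite /Pa /= => /andP[Hcc' /forallP Hall] Hmin.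
have [c'' [Hc'c'' Hall']] := ex_ptr c'.
have Hcne : c' != c by apply/eqP => Heq; move: (HTg Hcc'); rewrite Heq (negbTE (Hirr c)).
have Hc'ne : c'' != c' by apply/eqP => Heq; move: (HTg Hc'c''); rewrite Heq (negbTE (Hirr c')).
have Hnot' : ~~ connect (erel (Er c' c'')) c'' c'.
  by apply/negP => /conn_sym; apply/negP/HTb.
case: (eqVneq c'' c) => [Heq|Hne].
  subst c''; case: (Hint (HTg Hcc')) => x [Hx Hx'].
  have H1 := implyP (Hall x) Hx; have H2 := Hall' x Hx'.
  move: H2; rewrite /side Er_swap => H2.
  apply: (negP (HTb Hcc')); apply: connect_trans H2 (conn_sym H1).
have : Pa (c', c'').
  by rewrite /Pa Hc'c''; apply/forallP => y; apply/implyP; apply: Hall'.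
move/Hmin => /=; apply/negP; rewrite -ltnNge; apply: proper_card.
apply/properP; split.
  apply/subsetP => y; rewrite !inE /side => /connectP[p Hp Hl].
  case Hc: (c' \in c'' :: p).
    case/splitPl: Hc Hp Hl => p1 p2 Hl1; rewrite cat_path => /andP[Hp1 _] _.
    by case/negP: Hnot'; apply/connectP; exists p1.
  have Hc1 : connect (erel (Er c c')) c' c''.
    apply: connect1.
    rewrite /erel /Er !inE !xpair_eqE Hc'c'' (negbTE Hne) (negbTE Hcne).
    by rewrite !andbF.
  apply: connect_trans Hc1 _.
  have HpE : path (erel E) c'' p.
    by apply: sub_path Hp => a b; rewrite /erel /Er !inE => /andP[_ /andP[_ ->]].
  apply/connectP; exists p => //; by case: (path_Er c (negbT Hc) HpE).
exists c'; rewrite !inE /side ?connect0 //.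
Qed.
End Contra.

Lemma lower_bound : t <= stretch g E.
Proof.
rewrite leqNgt; apply/negP => Hlt; apply: contra_main => x y Hg.
apply: leq_ltn_trans Hlt; exact: (leq_bigmax_cond (x, y)).
Qed.
End LB.

Module C.

Section Ham.
Variables (d : nat) (n : nat -> nat).
Notation V := (hvert d n).
Implicit Types (x y z u v c w : V).

Definition hd x y := #|[set i : 'I_d | (x i : nat) != y i]|.
Lemma hadjE x y : hadj x y = (hd x y == 1). Proof. by []. Qed.

Lemma hd_refl x : hd x x = 0.
Proof. by apply/eqP; rewrite cards_eq0; apply/eqP/setP => i; rewrite !inE eqxx. Qed.

Lemma hd_sym x y : hd x y = hd y x.
Proof. by rewrite /hd; apply: eq_card => i; rewrite !inE eq_sym. Qed.

Lemma hd_tri x y z : hd x z <= hd x y + hd y z.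
Proof.
rewrite /hd; apply: leq_trans (leq_of_leqif (leq_card_setU _ _)).
apply: subset_leq_card; apply/subsetP => i; rewrite !inE.
move=> H; apply/orP; case: (eqVneq (x i : nat) (y i)) => E; [by right; rewrite -E | by left].
Qed.

Lemma hd_le x y : hd x y <= d.
Proof. by rewrite /hd; apply: leq_trans (max_card _) _; rewrite card_ord. Qed.

Lemma hadj_irr x : ~~ hadj x x.
Proof. by rewrite hadjE hd_refl. Qed.

Lemma hadj_sym x y : hadj x y = hadj y x.
Proof. by rewrite !hadjE hd_sym. Qed.

Lemma hlip x a w : hadj x a -> hd x w <= (hd a w).+1.
Proof. by rewrite hadjE => /eqP H; apply: leq_trans (hd_tri x a w) _; rewrite H. Qed.

Definition Far c x := [forall i, (x i : nat) != c i].

Lemma Far_hd c x : Far c x = (hd x c == d).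
Proof.
apply/forallP/idP => [H | /eqP H i].
  have E : [set i : 'I_d | (x i : nat) != c i] = setT by apply/setP => i; rewrite !inE H.
  by rewrite /hd E cardsT card_ord.
have : [set i : 'I_d | (x i : nat) != c i] == setT.
  by rewrite eqEcard subsetT cardsT card_ord /=; rewrite /hd in H; rewrite H.
by move/eqP/setP/(_ i); rewrite !inE.
Qed.

Definition upd x y (i : 'I_d) : V := [ffun j => if j == i then y j else x j].
Lemma updE x y i j : upd x y i j = if j == i then y j else x j.
Proof. by rewrite ffunE. Qed.

Lemma hadj_upd x y i : (x i : nat) != y i -> hadj x (upd x y i).
Proof.
move=> H; rewrite hadjE /hd; apply/cards1P; exists i; apply/setP => j.
rewrite !inE updE; case: (eqVneq j i) => [->|Hji]; by rewrite ?eqxx ?(negbTE Hji).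
Qed.

Lemma hd_upd_lt x y i : (x i : nat) != y i -> hd (upd x y i) y < hd x y.
Proof.
move=> H; apply: proper_card; apply/properP; split.
  apply/subsetP => j; rewrite !inE updE; case: (eqVneq j i) => [->|Hji]; by rewrite ?eqxx.
by exists i; rewrite !inE ?updE ?eqxx.
Qed.

Lemma far_conn c (R : rel V) :
  (forall a b, hadj a b -> Far c a -> Far c b -> R a b) ->
  forall x y, Far c x -> Far c y -> connect R x y.
Proof.
move=> HR x y; move: {2}(hd x y) (leqnn (hd x y)) => m.
elim: m x => [|m IH] x Hm Hx Hy.
  have -> : x = y; last exact: connect0.
  apply/ffunP => i; apply/val_inj/eqP; apply/negPn/negP => Hi.
  by move: Hm; rewrite leqn0 cards_eq0 => /eqP/setP/(_ i); rewrite !inE Hi.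
case: (eqVneq x y) => [-> | Hne]; first exact: connect0.
have [i Hi] : exists i, (x i : nat) != y i.
  case: (boolP [exists i, (x i : nat) != y i]) => [/existsP //|/existsPn H]; case/eqP: Hne.
  by apply/ffunP => i; apply/val_inj/eqP; move: (H i); rewrite negbK.
have Hz : Far c (upd x y i).
  apply/forallP => j; rewrite updE; case: (j == i); [exact: (forallP Hy) | exact: (forallP Hx)].
apply: (@connect_trans _ _ (upd x y i)); first by apply: connect1; apply: HR; rewrite ?hadj_upd.
apply: IH => //; have := hd_upd_lt Hi; lia.
Qed.

Lemma ex_ne1 m (a : 'I_m) : 2 <= m -> exists v : 'I_m, (v : nat) != a.
Proof.
move=> Hm; case: (boolP [exists v : 'I_m, (v : nat) != a]) => [/existsP //|/existsPn H].
have Hs : [set: 'I_m] \subset [set a].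
  by apply/subsetP => v _; rewrite !inE; move: (H v); rewrite negbK => /eqP Hv; apply/eqP/val_inj.
by have := subset_leq_card Hs; rewrite cardsT card_ord cards1; lia.
Qed.

Lemma ex_ne2 m (a b : 'I_m) : 3 <= m -> exists v : 'I_m, ((v : nat) != a) && ((v : nat) != b).
Proof.
move=> Hm; case: (boolP [exists v : 'I_m, ((v : nat) != a) && ((v : nat) != b)]) => [/existsP //|/existsPn H].
have Hs : [set: 'I_m] \subset [set a; b].
  apply/subsetP => v _; rewrite !inE; move: (H v); rewrite negb_and !negbK.
  by case/orP => /eqP Hv; apply/orP; [left|right]; apply/eqP/val_inj.
have := subset_leq_card Hs; rewrite cardsT card_ord cards2; lia.
Qed.

Hypothesis hn2 : forall i : 'I_d, 2 <= n i.

Definition fp1 c : V := [ffun i => odflt (c i) [pick v : 'I_(n i) | (v : nat) != c i]].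

Lemma fp1_far c : Far c (fp1 c).
Proof.
apply/forallP => i; rewrite ffunE; case: pickP => [v -> //|H].
by case: (ex_ne1 (c i) (hn2 i)) => v Hv; move: (H v); rewrite Hv.
Qed.

Definition fp2 c c' : V :=
  [ffun i => odflt (c i) [pick v : 'I_(n i) | ((v : nat) != c i) && ((v : nat) != c' i)]].

Lemma fp2_far c c' : (forall i : 'I_d, 3 <= n i) -> Far c (fp2 c c') && Far c' (fp2 c c').
Proof.
move=> H3.
have H : forall i, ((fp2 c c' i : nat) != c i) && ((fp2 c c' i : nat) != c' i).
  move=> i; rewrite ffunE; case: pickP => [v -> //|H].
  by case: (ex_ne2 (c i) (c' i) (H3 i)) => v Hv; move: (H v); rewrite Hv.
by apply/andP; split; apply/forallP => i; case/andP: (H i).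
Qed.

Lemma card_V : 2 ^ d <= #|V|.
Proof.
have -> : #|V| = \prod_(i : 'I_d) n i.
  rewrite card_dep_ffun foldrE big_map big_enum /=; apply: eq_bigr => i _; exact: card_ord.
rewrite -{1}(card_ord d) -prod_nat_const; apply: leq_prod => i _; exact: hn2.
Qed.

Lemma two_d : 2 * d <= #|V|.
Proof.
apply: leq_trans card_V; elim: d => [//|k IH]; rewrite expnS; lia.
Qed.

End Ham.

End C.
Import C.

Section Tree.
Variables (d : nat) (n : nat -> nat) (r : hvert d n).
Notation V := (hvert d n).
Implicit Types (x y z u v c w : V).

Definition par x : V :=
  [ffun i : 'I_d => if [exists j : 'I_d, (i < j) && ((x j : nat) != r j)] then x i else r i].
Definition Y (j : nat) x : V := [ffun i : 'I_d => if i < j then x i else r i].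
Definition E0 : {set V * V} :=
  [set p : V * V | (p.1 != p.2) && ((p.2 == par p.1) || (p.1 == par p.2))].

Lemma E0_sym a b : (a, b) \in E0 -> (b, a) \in E0.
Proof. by rewrite !inE /= eq_sym orbC. Qed.

Lemma par_Y (j : 'I_d) x : (x j : nat) != r j -> par (Y j.+1 x) = Y j x.
Proof.
move=> Hj; apply/ffunP => i; rewrite !ffunE.
case: (ltnP i j) => Hij.
  rewrite ifT; first by rewrite ltnS (ltnW Hij).
  by apply/existsP; exists j; rewrite Hij /= ffunE ltnSn.
rewrite ifF //; apply/negbTE/existsPn => l; rewrite ffunE.
case: (ltnP i l) => //= Hil; rewrite ltnS leqNgt (leq_ltn_trans Hij Hil) /= eqxx //.
Qed.

Lemma Yeq (j : 'I_d) x : (x j : nat) = r j -> Y j.+1 x = Y j x.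
Proof.
move=> H; apply/ffunP => i; rewrite !ffunE ltnS leq_eqVlt.
case: (eqVneq (i : nat) j) => //= Hij; have -> : i = j by apply: val_inj.
by rewrite ltnn; apply: val_inj.
Qed.

Lemma Yarc (j : 'I_d) x : (x j : nat) != r j -> (Y j.+1 x, Y j x) \in E0.
Proof.
move=> H; rewrite inE /= -(par_Y H) eqxx orTb andbT (par_Y H).
apply/eqP => /ffunP/(_ j); rewrite !ffunE ltnSn ltnn => Heq.
by rewrite Heq eqxx in H.
Qed.

Lemma Ystep (j : nat) x : Y j.+1 x = Y j x \/ (Y j.+1 x, Y j x) \in E0.
Proof.
case: (ltnP j d) => Hjd; last first.
  left; apply/ffunP => i; rewrite !ffunE.
  have Hi : i < j by apply: leq_trans (ltn_ord i) Hjd.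
  by rewrite Hi (ltnW Hi : i < j.+1).
pose j' := Ordinal Hjd.
case: (eqVneq (x j' : nat) (r j')) => H; [left; exact: (Yeq H) | right; exact: (Yarc H)].
Qed.

Lemma step_len (j : 'I_d) x : walk_len E0 ((x j : nat) != r j) (Y j.+1 x) (Y j x).
Proof.
case: (eqVneq (x j : nat) (r j)) => H /=; first by rewrite (Yeq H); exact: walk0.
exact: walk1 (Yarc H).
Qed.

Lemma walk_up m k x : exists2 L, L <= m & walk_len E0 L (Y (k + m) x) (Y k x).
Proof.
elim: m => [|m [L HL HW]]; first by exists 0; rewrite ?addn0 ?walk0.
rewrite addnS; case: (Ystep (k + m) x) => [->|Ha]; first by exists L => //; lia.
exists L.+1; first lia.
by rewrite -add1n; apply: walk_cat (walk1 Ha) HW.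
Qed.

Lemma Yd x : Y d x = x.
Proof. by apply/ffunP => i; rewrite ffunE ltn_ord. Qed.
Lemma Y0 x : Y 0 x = r.
Proof. by apply/ffunP => i; rewrite ffunE. Qed.

Definition pot x := #|[set i : 'I_d | (x i : nat) != r i]|.

Lemma pot_par x : pot (par x) <= pot x.
Proof.
apply: subset_leq_card; apply/subsetP => i; rewrite !inE ffunE.
by case: ifP => //; rewrite eqxx.
Qed.

Lemma ex_diff x y : x != y -> exists i, (x i : nat) != y i.
Proof.
move=> Hne; case: (boolP [exists i, (x i : nat) != y i]) => [/existsP //|/existsPn H].
case/eqP: Hne; apply/ffunP => i; apply/val_inj/eqP; move: (H i); rewrite negbK //.
Qed.

Lemma pot_par_lt x : x != par x -> pot (par x) < pot x.
Proof.
move=> /ex_diff [i Hi]; apply: proper_card; apply/properP; split.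
  apply/subsetP => j; rewrite !inE ffunE; by case: ifP => //; rewrite eqxx.
exists i; rewrite !inE; move: Hi; rewrite ffunE; case: ifP; rewrite ?eqxx //.
Qed.

Lemma pot_iter m x : pot (iter m par x) <= pot x.
Proof. elim: m => //= m IH; apply: leq_trans (pot_par _) IH. Qed.

Lemma hadj_par x : x != par x -> hadj x (par x).
Proof.
move=> Hne; have [i0 Hi0] := ex_diff Hne.
have key : forall i, (x i : nat) != par x i ->
   ~~ [exists j : 'I_d, (i < j) && ((x j : nat) != r j)] && ((x i : nat) != r i).
  move=> i; rewrite ffunE; case: ifP => [_|Hf]; rewrite ?eqxx // Hf.
rewrite hadjE /hd; apply/cards1P; exists i0; apply/setP => i; rewrite !inE.
apply/idP/eqP => [Hi|->//].
case/andP: (key _ Hi) => /existsPn H1 H2; case/andP: (key _ Hi0) => /existsPn H3 H4.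
apply: val_inj; case: (ltngtP i i0) => // Hlt.
  by move: (H1 i0); rewrite Hlt H4.
by move: (H3 i); rewrite Hlt H2.
Qed.

Lemma E0_hadj a b : (a, b) \in E0 -> hadj a b.
Proof.
rewrite inE /= => /andP[Hne /orP[/eqP Hb|/eqP Hab]].
  by rewrite Hb; apply: hadj_par; rewrite -Hb.
by rewrite hadj_sym Hab; apply: hadj_par; rewrite -Hab eq_sym.
Qed.

Lemma walk_connect (E : {set V * V}) k a b : walk_len E k a b -> connect (erel E) a b.
Proof. by case/walk_lenP => p [_ Hp Hl]; apply/connectP; exists p. Qed.

Lemma conn_root x : connect (erel E0) x r.
Proof.
have [L _ HW] := walk_up d 0 x; rewrite add0n Yd Y0 in HW; exact: walk_connect HW.
Qed.

Lemma Er_sym2 (E : {set V * V}) a b :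
  (forall u v, (u, v) \in E -> (v, u) \in E) ->
  symmetric (erel (E :\ (a, b) :\ (b, a))).
Proof.
move=> Hs; have H : forall u v, erel (E :\ (a, b) :\ (b, a)) u v -> erel (E :\ (a, b) :\ (b, a)) v u.
  move=> u v; rewrite /erel !inE !xpair_eqE => /and3P[H1 H2 H3].
  by rewrite (Hs _ _ H3) andbT; apply/andP; split; [move: H2|move: H1]; apply: contra;
     case/andP => -> ->.
by move=> u v; apply/idP/idP; apply: H.
Qed.

Lemma bridge_par w : w != par w ->
  ~~ connect (erel (E0 :\ (w, par w) :\ (par w, w))) w (par w).
Proof.
move=> Hw.
have Hcl : forall a b, erel (E0 :\ (w, par w) :\ (par w, w)) a b ->
    (exists m, iter m par a = w) -> exists m, iter m par b = w.
  move=> a b; rewrite /erel !inE !xpair_eqE /=.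
  move=> /and3P[H1 H2 /andP[Hab /orP[/eqP Hb|/eqP Ha]]] [m Hm].
    case: m Hm => [|m] Hm /=.
      by move: H2; rewrite -Hm Hb !eqxx.
    by exists m; rewrite Hb -iterSr.
  by exists m.+1; rewrite iterSr -Ha.
apply/negP => /connectP[p Hp Hl].
have Hpath : forall u q, path (erel (E0 :\ (w, par w) :\ (par w, w))) u q ->
    (exists m, iter m par u = w) -> exists m, iter m par (last u q) = w.
  move=> u q; elim: q u => [|a q IH] u //=; case/andP => Hua Hq Hu.
  apply: IH Hq _; exact: Hcl Hua Hu.
case: (Hpath w p Hp (ex_intro _ 0 erefl)); rewrite -Hl => m Hm.
have := pot_iter m (par w); rewrite Hm; have := pot_par_lt Hw; lia.
Qed.

Lemma E0_tree : spanning_tree (@hadj d n) E0.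
Proof.
have Hsym : symmetric (erel E0).
  by move=> a b; apply/idP/idP; apply: E0_sym.
apply/and4P; split.
- by apply/forallP => u; apply/forallP => v; apply/implyP; exact: E0_hadj.
- by apply/forallP => u; apply/forallP => v; apply/implyP; exact: E0_sym.
- apply/forallP => u; apply/forallP => v; apply: connect_trans (conn_root u) _.
  by rewrite (sym_connect_sym Hsym); exact: conn_root.
apply/forallP => u; apply/forallP => v; apply/implyP.
rewrite inE /= => /andP[Hne /orP[/eqP Hv|/eqP Hu]].
  by rewrite Hv; apply: bridge_par; rewrite -Hv.
rewrite (sym_connect_sym (Er_sym2 u v E0_sym)).
have -> : E0 :\ (u, v) :\ (v, u) = E0 :\ (v, u) :\ (u, v).
  by apply/setP => z; rewrite !inE andbCA.
by rewrite Hu; apply: bridge_par; rewrite -Hu eq_sym.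
Qed.

Lemma edge_walk x y : hadj x y -> exists k : 'I_d, (x k : nat) != y k /\ exists2 L, L <= 2 * (d - k.+1) + (((x k : nat) != r k) + ((y k : nat) != r k))
           & walk_len E0 L x y.
Proof.
rewrite hadjE /hd => /cards1P[k Hk]; exists k.
have Hxy : forall i, ((x i : nat) != y i) = (i == k).
  by move=> i; move/setP/(_ i): Hk; rewrite !inE.
split; first by rewrite Hxy.
have HY : Y k x = Y k y.
  apply/ffunP => i; rewrite !ffunE; case: ifP => // Hik; apply: val_inj; apply/eqP.
  by apply/negPn; rewrite Hxy; apply/eqP => Hi; rewrite Hi ltnn in Hik.
have Hd : k.+1 + (d - k.+1) = d by rewrite subnKC // ltn_ord.
have [L1 HL1 W1] := walk_up (d - k.+1) k.+1 x.
have [L2 HL2 W2] := walk_up (d - k.+1) k.+1 y.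
rewrite Hd Yd in W1; rewrite Hd Yd in W2.
have W1' := walk_cat W1 (step_len k x).
have W2' := walk_sym E0_sym (walk_cat W2 (step_len k y)).
rewrite HY in W1'.
exists ((L1 + ((x k : nat) != r k)) + (L2 + ((y k : nat) != r k))); first lia.
exact: walk_cat W1' W2'.
Qed.

End Tree.

Lemma hd_upd_inc d n (y w c : hvert d n) i : (y i : nat) = c i -> (w i : nat) != c i ->
  hd (upd y w i) c = (hd y c).+1.
Proof.
move=> H1 H2; rewrite /hd.
have -> : [set j | (upd y w i j : nat) != c j] = i |: [set j | (y j : nat) != c j].
  apply/setP => j; rewrite !inE updE; case: (eqVneq j i) => [->|Hji] //=.
by rewrite cardsU1 !inE H1 eqxx.
Qed.

Theorem theorem3p2 (d : nat) (n : nat -> nat)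
  (hd : 1 <= d)
  (hn2 : forall i, i < d -> 2 <= n i)
  (hmono : forall i j, i <= j -> j < d -> n i <= n j) :
  tree_stretch (@hadj d n) = (if n 0 == 2 then 2 * d - 1 else 2 * d).
Proof.
have hn2' : forall i : 'I_d, 2 <= n i by move=> i; apply: hn2.
pose r : hvert d n := [ffun i : 'I_d => Ordinal (leq_trans (isT : 0 < 2) (hn2' i))].
pose i0 : 'I_d := Ordinal hd.
have Hs : forall c : hvert d n, fp1 c != c.
  move=> c; apply/eqP => Hc; move: (forallP (fp1_far hn2' c) i0); rewrite Hc eqxx //.
have Hlipg : forall u a w : hvert d n, hadj u a -> C.hd u w <= (C.hd a w).+1 := @hlip d n.
set b := (if n 0 == 2 then 2 * d - 1 else 2 * d).
apply/eqP; rewrite eqn_leq; apply/andP; split.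
  apply: leq_trans (tree_stretch_le (E0_tree r)) _.
  apply/bigmax_leqP => [[x y]] /= Hxy.
  case: (edge_walk r Hxy) => k [Hk [L HL HW]].
  apply: leq_trans (dist_le HW) _; apply: leq_trans HL _.
  have Hkd := ltn_ord k.
  rewrite /b; case: ifP => Hn0; last by lia.
  case: (posnP k) => Hk0; last by lia.
  have Hnk : n k = 2 by rewrite Hk0; apply/eqP.
  have Hx : (x k : nat) < 2 by rewrite -Hnk; exact: ltn_ord.
  have Hy : (y k : nat) < 2 by rewrite -Hnk; exact: ltn_ord.
  have Hr : (r k : nat) < 2 by rewrite -Hnk; exact: ltn_ord.
  move: Hk Hx Hy Hr Hk0; lia.
apply: tree_stretch_ge; first by apply: leq_trans (two_d hn2'); rewrite /b; case: ifP; lia.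
move=> E HE; rewrite /b; case: ifP => Hn0.
  apply: (@lower_bound _ _ (@C.hd d n) E (2 * d - 1)
            (fun c x => d.-1 <= C.hd x c)
            (fun c a b => [&& hadj a b, Far c a & d.-1 <= C.hd b c]) r HE
            (@hadj_irr d n) Hlipg (@hd_refl d n)).
  - move=> c x y /and3P[Hxy Hx Hy]; split => //.
    by rewrite (hd_sym c y); move: Hx; rewrite Far_hd => /eqP ->; lia.
  - move=> c; exists (fp1 c); split; first exact: Hs.
    move=> y Hy; case: (boolP (Far c y)) => Hfy.
      apply: (far_conn _ (fp1_far hn2' c) Hfy) => a b' H1 H2 Hb.
      by rewrite /= H1 H2 /=; rewrite Far_hd in Hb; rewrite (eqP Hb) leq_pred.
    have [i Hi] : exists i, (y i : nat) = c i.
      have : [exists i, ~~ ((y i : nat) != c i)] by rewrite -negb_forall.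
      by case/existsP => i; rewrite negbK => /eqP Hi; exists i.
    have Hw := forallP (fp1_far hn2' c) i.
    have Hz : Far c (upd y (fp1 c) i).
      rewrite Far_hd hd_upd_inc //; have := hd_le (upd y (fp1 c) i) c.
      by rewrite hd_upd_inc //; move: Hy; lia.
    apply: (@connect_trans _ _ (upd y (fp1 c) i)).
      apply: (far_conn _ (fp1_far hn2' c) Hz) => a b' H1 H2 Hb.
      by rewrite /= H1 H2 /=; rewrite Far_hd in Hb; rewrite (eqP Hb) leq_pred.
    apply: connect1 => /=; rewrite Hz Hy andbT hadj_sym andbT; apply: hadj_upd; by rewrite Hi eq_sym.
  - move=> c c' Hcc'; exists (fp1 c); have Hf := fp1_far hn2' c.
    rewrite Far_hd in Hf; rewrite (eqP Hf) leq_pred; split => //.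
    have := hd_tri (fp1 c) c' c; rewrite (eqP Hf) hd_sym.
    rewrite hadjE in Hcc'; rewrite (hd_sym c' c) (eqP Hcc'); lia.
  - by apply: leq_trans (two_d hn2'); lia.
have H3 : forall i : 'I_d, 3 <= n i.
  move=> i; have := hn2 0 hd; have := hmono 0 i isT (ltn_ord i); move/negbT: Hn0; lia.
apply: (@lower_bound _ _ (@C.hd d n) E (2 * d)
          (fun c x => Far c x)
          (fun c a b => [&& hadj a b, Far c a & Far c b]) r HE
          (@hadj_irr d n) Hlipg (@hd_refl d n)).
- move=> c x y /and3P[Hxy Hx Hy]; split => //.
  by rewrite (hd_sym c y); move: Hx Hy; rewrite !Far_hd => /eqP -> /eqP ->; lia.
- move=> c; exists (fp1 c); split; first exact: Hs.
  move=> y Hy; apply: (far_conn _ (fp1_far hn2' c) Hy) => a b' H1 H2 Hb3.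
  by rewrite /= H1 H2 Hb3.
- move=> c c' _; exists (fp2 c c'); exact/andP/fp2_far.
- exact: two_d.
Qed.
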